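(* Fix a continuous density $\rho_0$ on $[0,R)$ with mass function $m_0$, and let $p_1,p_2,p_3$ be three pairwise distinct solutions of the TOV system with this density, with central values $p_{c,i}=p_i(0)$. Then for every real $\lambda$, $$p(r)=\frac{\lambda\,p_1(r)[p_3(r)-p_2(r)]+(1-\lambda)\,p_2(r)[p_3(r)-p_1(r)]}{\lambda[p_3(r)-p_2(r)]+(1-\lambda)[p_3(r)-p_1(r)]}$$ solves the TOV system with density $\rho_0$ wherever the denominator does not vanish, and its central pressure is $$p_c=\frac{\lambda\,p_{c,1}[p_{c,3}-p_{c,2}]+(1-\lambda)\,p_{c,2}[p_{c,3}-p_{c,1}]}{\lambda[p_{c,3}-p_{c,2}]+(1-\lambda)[p_{c,3}-p_{c,1}]}.$$ *)

(* Defs.v *)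
(* Geometrized units G = c = 1. *)
From Stdlib Require Import Reals.
From Coquelicot Require Import Coquelicot.
Open Scope R_scope.

Definition cont_on_0R (R0 : R) (f : R -> R) : Prop :=
  forall r, 0 <= r < R0 ->
    filterlim f (within (fun x => 0 <= x < R0) (locally r)) (locally (f r)).

Definition mass (rho0 : R -> R) (r : R) : R :=
  4 * PI * RInt (fun s => rho0 s * s ^ 2) 0 r.

Definition tov_rhs (rho0 : R -> R) (r pr : R) : R :=
  - ((rho0 r + pr) * (mass rho0 r + 4 * PI * r ^ 3 * pr))
    / (r * (r - 2 * mass rho0 r)).

Definition tov_at (rho0 : R -> R) (p : R -> R) (r : R) : Prop :=
  r - 2 * mass rho0 r <> 0 /\ is_derive p r (tov_rhs rho0 r (p r)).

(* p is a solution of the TOV system with density rho0 on [0, R0):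
   continuous on [0, R0) (so p(0) is its central value) and solving the
   TOV equation at every r in (0, R0). *)
Definition tov_solution (R0 : R) (rho0 : R -> R) (p : R -> R) : Prop :=
  cont_on_0R R0 p /\ (forall r, 0 < r < R0 -> tov_at rho0 p r).

Definition superpose (lam a1 a2 a3 : R) : R :=
  (lam * a1 * (a3 - a2) + (1 - lam) * a2 * (a3 - a1))
  / (lam * (a3 - a2) + (1 - lam) * (a3 - a1)).

Definition superpose_den (lam a1 a2 a3 : R) : R :=
  lam * (a3 - a2) + (1 - lam) * (a3 - a1).

(* Main.v *)
Require Import Defs.
From Stdlib Require Import Reals Lra.
From Coquelicot Require Import Coquelicot.
Open Scope R_scope.
Section L.
Context {T : Type} {F : (T -> Prop) -> Prop} {FF : Filter F}.
Lemma lplus (f g : T -> R) a b : filterlim f F (locally a) -> filterlim g F (locally b) ->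
  filterlim (fun x => f x + g x) F (locally (a + b)).
Proof. intros Hf Hg. eapply filterlim_comp_2; [exact Hf|exact Hg|]. apply (@filterlim_plus R_AbsRing R_NormedModule). Qed.
Lemma lmult (f g : T -> R) a b : filterlim f F (locally a) -> filterlim g F (locally b) ->
  filterlim (fun x => f x * g x) F (locally (a * b)).
Proof. intros Hf Hg. eapply filterlim_comp_2; [exact Hf|exact Hg|]. apply (@filterlim_mult R_AbsRing). Qed.
Lemma lopp (f : T -> R) a : filterlim f F (locally a) ->
  filterlim (fun x => - f x) F (locally (- a)).
Proof. intros Hf. eapply filterlim_comp; [exact Hf|]. apply (@filterlim_opp R_AbsRing R_NormedModule). Qed.
Lemma linv (f : T -> R) a : a <> 0 -> filterlim f F (locally a) ->
  filterlim (fun x => / f x) F (locally (/ a)).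
Proof. intros Ha Hf. eapply filterlim_comp; [exact Hf|].
  apply (filterlim_Rbar_inv (Finite a)). simpl; congruence. Qed.
End L.

Lemma der_lin (f g : R -> R) x df dg : is_derive f x df -> is_derive g x dg ->
  forall a b, is_derive (fun y => a * f y + b * g y) x (a * df + b * dg).
Proof. intros Hf Hg a b. apply (@is_derive_plus R_AbsRing R_NormedModule);
  apply is_derive_scal; assumption. Qed.
Lemma der_min (f g : R -> R) x df dg : is_derive f x df -> is_derive g x dg ->
  is_derive (fun y => f y - g y) x (df - dg).
Proof. intros Hf Hg. apply (@is_derive_minus R_AbsRing R_NormedModule); assumption. Qed.
Lemma der_mul (f g : R -> R) x df dg : is_derive f x df -> is_derive g x dg ->
  is_derive (fun y => f y * g y) x (df * g x + f x * dg).
Proof. intros Hf Hg. apply (@is_derive_mult R_AbsRing); try assumption.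
  intros; apply Rmult_comm. Qed.

Theorem mainTheorem6 (R0 : R) (rho0 p1 p2 p3 : R -> R) :
  0 < R0 ->
  cont_on_0R R0 rho0 ->
  tov_solution R0 rho0 p1 ->
  tov_solution R0 rho0 p2 ->
  tov_solution R0 rho0 p3 ->
  (exists r, 0 <= r < R0 /\ p1 r <> p2 r) ->
  (exists r, 0 <= r < R0 /\ p1 r <> p3 r) ->
  (exists r, 0 <= r < R0 /\ p2 r <> p3 r) ->
  forall lam : R,
    let p := fun r => superpose lam (p1 r) (p2 r) (p3 r) in
    (forall r, 0 < r < R0 ->
       superpose_den lam (p1 r) (p2 r) (p3 r) <> 0 -> tov_at rho0 p r) /\
    (superpose_den lam (p1 0) (p2 0) (p3 0) <> 0 ->
       filterlim p (within (fun x => 0 <= x < R0) (locally 0)) (locally (p 0)) /\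
       p 0 = (lam * p1 0 * (p3 0 - p2 0) + (1 - lam) * p2 0 * (p3 0 - p1 0))
             / (lam * (p3 0 - p2 0) + (1 - lam) * (p3 0 - p1 0))).
Proof.
  intros HR Hrho [C1 T1] [C2 T2] [C3 T3] _ _ _ lam p. split.
  - intros r Hr Hden.
    destruct (T1 r Hr) as [Hd D1]. destruct (T2 r Hr) as [_ D2]. destruct (T3 r Hr) as [_ D3].
    split; [exact Hd|].
    unfold superpose_den in Hden.
    assert (HN := der_lin _ _ r _ _ (der_mul _ _ r _ _ D1 (der_min _ _ r _ _ D3 D2))
                  (der_mul _ _ r _ _ D2 (der_min _ _ r _ _ D3 D1)) lam (1 - lam)).
    assert (HD := der_lin _ _ r _ _ (der_min _ _ r _ _ D3 D2) (der_min _ _ r _ _ D3 D1) lam (1 - lam)).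
    assert (H := is_derive_div _ _ r _ _ HN HD Hden).
    cbv beta in H.
    match type of H with is_derive _ _ ?v => replace (tov_rhs rho0 r (p r)) with v end.
    + eapply is_derive_ext; [|exact H]. intros t; cbv beta. unfold p, superpose. f_equal; ring.
    + unfold tov_rhs in *. unfold p, superpose.
      generalize (rho0 r) (mass rho0 r) (p1 r) (p2 r) (p3 r) (4 * PI * r ^ 3) Hd Hden.
      intros a m x1 x2 x3 k Hd' Hden'. field. split; [exact Hden'|]. split; [exact Hd'|]. lra.
  - intros Hden. split; [|reflexivity].
    assert (H0 : 0 <= 0 < R0) by lra.
    pose proof (C1 0 H0) as L1. pose proof (C2 0 H0) as L2. pose proof (C3 0 H0) as L3.
    unfold p, superpose. unfold superpose_den in Hden.
    apply lmult.
    + apply lplus; repeat (apply lmult || apply lplus || (apply filterlim_const) || assumption || (unfold Rminus; apply lplus) || apply lopp).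
    + apply linv; [exact Hden|].
      unfold Rminus; repeat (apply lmult || apply lplus || apply filterlim_const || assumption || apply lopp).
Qed.
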